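(* Let $Z$ be a metric space and let $X, Y \subseteq Z$ be compact subsets. Regard $\mathcal{H}(X)$ and $\mathcal{H}(Y)$ as subsets of the metric space $\mathcal{H}(Z)$ (with the Hausdorff distance). Then $$\bigl|\mathcal{H}(X)\,\mathcal{H}(Y)\bigr|_{\mathcal{H}(Z)} = |XY|_Z,$$ i.e. the Hausdorff distance in $\mathcal{H}(Z)$ between $\mathcal{H}(X)$ and $\mathcal{H}(Y)$ equals the Hausdorff distance in $Z$ between $X$ and $Y$.
   Context: For a metric space $Z$, $|xy|$ denotes the distance between points; for nonempty $B \subseteq Z$ and $x \in Z$, $|xB| = \inf\{|xb| : b \in B\}$. For nonempty subsets $P,Q$ of a metric space $W$, the Hausdorff distance is $|PQ|_W = \max\{\sup_{p\in P}|pQ|, \sup_{q\in Q}|qP|\}$. For a metric space $W$, $\mathcal{H}(W)$ (the Hausdorff hyperspace) is the family of all nonempty bounded closed subsets of $W$ endowed with the Hausdorff distance; for compact $X\subseteq Z$, $\mathcal{H}(X)\subseteq\mathcal{H}(Z)$. *)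

(* Defs.v *)
From Stdlib Require Import Reals List.
Open Scope R_scope.

Definition is_inf (E : R -> Prop) (m : R) : Prop :=
  (forall x, E x -> m <= x) /\ (forall b, (forall x, E x -> b <= x) -> b <= m).
Definition is_sup (E : R -> Prop) (m : R) : Prop :=
  (forall x, E x -> x <= m) /\ (forall b, (forall x, E x -> x <= b) -> m <= b).

(* A "distance relation" D x y t : "the distance between x and y is t".
   This lets us treat Z (with D x y t := t = dist x y) and the hyperspace
   H(Z) (with D := Hausdorff distance relation) uniformly. *)

Definition dist_pt_set {A : Type} (D : A -> A -> R -> Prop)
    (x : A) (B : A -> Prop) (r : R) : Prop :=
  is_inf (fun t => exists b, B b /\ D x b t) r.

Definition hausdorff {A : Type} (D : A -> A -> R -> Prop)
    (P Q : A -> Prop) (r : R) : Prop :=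
  exists s1 s2,
    is_sup (fun t => exists p, P p /\ dist_pt_set D p Q t) s1 /\
    is_sup (fun t => exists q, Q q /\ dist_pt_set D q P t) s2 /\
    r = Rmax s1 s2.

Definition mdist (Z : Metric_Space) : Base Z -> Base Z -> R -> Prop :=
  fun x y t => t = dist Z x y.

Definition hdist (Z : Metric_Space) : (Base Z -> Prop) -> (Base Z -> Prop) -> R -> Prop :=
  hausdorff (mdist Z).

Definition is_open (Z : Metric_Space) (U : Base Z -> Prop) : Prop :=
  forall x, U x -> exists eps, eps > 0 /\ forall y, dist Z x y < eps -> U y.

Definition mcompact (Z : Metric_Space) (X : Base Z -> Prop) : Prop :=
  forall (I : Type) (U : I -> Base Z -> Prop),
    (forall i, is_open Z (U i)) ->
    (forall x, X x -> exists i, U i x) ->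
    exists l : list I, forall x, X x -> exists i, In i l /\ U i x.

Definition nonempty {T : Type} (A : T -> Prop) : Prop := exists a, A a.

Definition bounded (Z : Metric_Space) (A : Base Z -> Prop) : Prop :=
  exists M, forall a b, A a -> A b -> dist Z a b <= M.

Definition closed_in (Z : Metric_Space) (W A : Base Z -> Prop) : Prop :=
  forall x, W x ->
    (forall eps, eps > 0 -> exists a, A a /\ dist Z x a < eps) -> A x.

(* A ∈ H(W): nonempty bounded closed subset of the subspace W of Z.
   H(Z) is  inH Z (fun _ => True). *)
Definition inH (Z : Metric_Space) (W : Base Z -> Prop) (A : Base Z -> Prop) : Prop :=
  nonempty A /\ (forall a, A a -> W a) /\ bounded Z A /\ closed_in Z W A.

(* Main.v *)
From Pilot Require Import Defs.
From Stdlib Require Import Reals List Lra Classical.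
Open Scope R_scope.

Section S.
Variable Z : Metric_Space.
Notation d := (dist Z).
Notation dp := (dist_pt_set (mdist Z)).
Hint Unfold mdist : core.
Notation bnd := (Pilot.Defs.bounded Z).

Lemma le_eps (a c : R) : (forall e, e > 0 -> a < c + e) -> a <= c.
Proof.
  intros H. destruct (Rle_lt_dec a c) as [h|h]; auto.
  specialize (H ((a - c)/2)). lra.
Qed.

Lemma sup_ex (E : R -> Prop) (M : R) : (exists x, E x) -> (forall x, E x -> x <= M) ->
  exists m, is_sup E m.
Proof.
  intros He Hb. destruct (completeness E) as [m [h1 h2]].
  - exists M; exact Hb.
  - exact He.
  - exists m; split; auto.
Qed.

Lemma inf_ex (E : R -> Prop) (M : R) : (exists x, E x) -> (forall x, E x -> M <= x) ->
  exists m, is_inf E m.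
Proof.
  intros [x Ex] Hb. destruct (sup_ex (fun y => E (- y)) (- M)) as [m [h1 h2]].
  - exists (- x). rewrite Ropp_involutive; auto.
  - intros y Ey. specialize (Hb _ Ey). lra.
  - exists (- m); split.
    + intros y Ey. assert (h := h1 (- y)). rewrite Ropp_involutive in h. specialize (h Ey). lra.
    + intros b Hb'. assert (- b >= m) ; [|lra].
      apply Rle_ge, h2. intros y Ey. specialize (Hb' _ Ey). lra.
Qed.

Lemma dp_ex x (B : Base Z -> Prop) : nonempty B -> exists r, dp x B r.
Proof.
  intros [b Hb]. apply (inf_ex _ 0).
  - exists (d x b), b; split; [auto|reflexivity].
  - intros t [c [_ Hc]]; unfold mdist in Hc; subst t. apply Rge_le, dist_pos.
Qed.

Lemma dp_le x B r b : dp x B r -> B b -> r <= d x b.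
Proof. intros [h _] Hb. apply h. exists b; split; [auto|reflexivity]. Qed.

Lemma dp_ge0 x B r : dp x B r -> 0 <= r.
Proof. intros [_ h]. apply h. intros t [c [_ Hc]]; unfold mdist in Hc; subst t. apply Rge_le, dist_pos. Qed.

Lemma dp_approx x B r e : dp x B r -> e > 0 -> exists b, B b /\ d x b < r + e.
Proof.
  intros [h1 h2] He. apply NNPP. intros Hn.
  assert (r + e <= r); [|lra].
  apply h2. intros t [b [Hb Hc]]; unfold mdist in Hc; subst t.
  destruct (Rlt_le_dec (d x b) (r + e)) as [l|l]; auto.
  exfalso; apply Hn; exists b; auto.
Qed.

Lemma dp_lip x y B r s : dp x B r -> dp y B s -> r <= s + d x y.
Proof.
  intros Hr [h1 h2].
  assert (s >= r - d x y); [|lra].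
  apply Rle_ge, h2. intros t [b [Hb Hc]]; unfold mdist in Hc; subst t.
  assert (h := dp_le _ _ _ _ Hr Hb). assert (h' := dist_tri Z x b y).
  lra.
Qed.

Lemma dp_mono x (B C : Base Z -> Prop) r s : (forall b, B b -> C b) -> dp x B r -> dp x C s -> s <= r.
Proof.
  intros HBC [_ h2] [h3 _]. apply h2. intros t [b [Hb Hc]]; unfold mdist in Hc; subst t. apply h3. exists b; split; [auto|reflexivity].
Qed.

Lemma hd_ex (A B : Base Z -> Prop) : nonempty A -> nonempty B -> bnd A -> bnd B ->
  exists r, hdist Z A B r.
Proof.
  intros [a0 Ha0] [b0 Hb0] [MA HMA] [MB HMB].
  destruct (sup_ex (fun t => exists p, A p /\ dp p B t) (MA + d a0 b0)) as [s1 Hs1].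
  - destruct (dp_ex a0 B) as [r Hr]. exists b0; auto. exists r, a0; auto.
  - intros t [p [Hp Ht]]. assert (h := dp_le _ _ _ _ Ht Hb0).
    assert (h' := dist_tri Z p b0 a0). assert (h'' := HMA p a0 Hp Ha0).
    rewrite (dist_sym Z a0 b0) in *. lra.
  - destruct (sup_ex (fun t => exists q, B q /\ dp q A t) (MB + d a0 b0)) as [s2 Hs2].
    + destruct (dp_ex b0 A) as [r Hr]. exists a0; auto. exists r, b0; auto.
    + intros t [p [Hp Ht]]. assert (h := dp_le _ _ _ _ Ht Ha0).
      assert (h' := dist_tri Z p a0 b0). assert (h'' := HMB p b0 Hp Hb0).
      rewrite (dist_sym Z a0 b0) in *. lra.
    + exists (Rmax s1 s2), s1, s2; auto.
Qed.

Lemma hd_le A B r c : hdist Z A B r ->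
  (forall a t, A a -> dp a B t -> t <= c) -> (forall b t, B b -> dp b A t -> t <= c) -> r <= c.
Proof.
  intros [s1 [s2 [[_ h1] [[_ h2] ->]]]] H1 H2.
  apply Rmax_lub; [apply h1 | apply h2]; intros t [p [Hp Ht]]; eauto.
Qed.

Lemma hd_ge1 A B r a t : hdist Z A B r -> A a -> dp a B t -> t <= r.
Proof.
  intros [s1 [s2 [[h1 _] [_ ->]]]] Ha Ht. eapply Rle_trans; [|apply Rmax_l].
  apply h1. exists a; auto.
Qed.



Lemma fold_bound (x0 : Base Z) (l : list (Base Z)) i : In i l ->
  d i x0 <= fold_right (fun k acc => d k x0 + acc) 0 l.
Proof.
  assert (Hp : forall l, 0 <= fold_right (fun k acc => d k x0 + acc) 0 l).
  { induction l0; simpl; [lra|]. assert (h := dist_pos Z a x0). lra. }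
  induction l as [|a l IH]; simpl; [tauto|]. intros [->|h].
  - specialize (Hp l). lra.
  - specialize (IH h). assert (h' := dist_pos Z a x0). lra.
Qed.

Lemma compact_bnd X : nonempty X -> mcompact Z X -> bnd X.
Proof.
  intros [x0 Hx0] Hc.
  destruct (Hc (Base Z) (fun i y => d i y < 1)) as [l Hl].
  - intros i x Hx. exists (1 - d i x). split; [lra|].
    intros y Hy. assert (h := dist_tri Z i y x). lra.
  - intros x _. exists x. assert (d x x = 0) by (apply dist_refl; auto). lra.
  - exists (2 + 2 * fold_right (fun k acc => d k x0 + acc) 0 l).
    intros a b Ha Hb. destruct (Hl a Ha) as [i [Hi Hia]]. destruct (Hl b Hb) as [j [Hj Hjb]].
    assert (h1 := fold_bound x0 l i Hi). assert (h2 := fold_bound x0 l j Hj).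
    assert (t1 := dist_tri Z a x0 i). assert (t2 := dist_tri Z a b x0).
    assert (t3 := dist_tri Z x0 b j).
    rewrite (dist_sym Z a i) in t1. rewrite (dist_sym Z x0 j) in t3.
    lra.
Qed.

Lemma inH_self X : nonempty X -> bnd X -> inH Z X X.
Proof. intros h1 h2. split; [auto|split; [auto|split; [auto|]]]. intros x Hx _; auto. Qed.

Lemma half X Y s1 r : nonempty X -> bnd X -> nonempty Y -> bnd Y ->
  is_sup (fun t => exists x, X x /\ dp x Y t) s1 -> s1 <= r ->
  exists S, is_sup (fun t => exists A, inH Z X A /\ dist_pt_set (hdist Z) A (inH Z Y) t) S
    /\ s1 <= S /\ S <= r.
Proof.
  intros HXn HXb HYn HYb [Hs1a Hs1b] Hs1r.
  assert (Up : forall A t, inH Z X A -> dist_pt_set (hdist Z) A (inH Z Y) t -> t <= r).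
  { intros A t [HAn [HAX [HAb _]]] Ht. apply le_eps. intros e He.
    set (B := fun y => Y y /\ forall u, dp y A u -> u <= r + e/2).
    assert (C : forall a, A a -> exists y, B y /\ d a y < r + e/2).
    { intros a Ha. destruct (dp_ex a Y HYn) as [u Hu].
      assert (u <= s1) by (apply Hs1a; exists a; auto).
      destruct (dp_approx _ _ _ (e/2) Hu) as [y [Hy Hay]]; [lra|].
      exists y. split; [|lra]. split; auto. intros u' Hu'.
      assert (h := dp_le _ _ _ _ Hu' Ha). rewrite (dist_sym Z y a) in h. lra. }
    assert (HBn : nonempty B).
    { destruct HAn as [a Ha]. destruct (C a Ha) as [y [Hy _]]. exists y; auto. }
    assert (HB : inH Z Y B).
    { split; [auto|split; [intros a [Ha _]; auto|split]].
      - destruct HYb as [M HM]. exists M. intros a b [Ha _] [Hb _]; auto.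
      - intros x Hx Hap. split; auto. intros u Hu.
        apply le_eps. intros dl Hdl.
        destruct (Hap dl Hdl) as [b [[Hb HbA] Hxb]].
        destruct (dp_ex b A HAn) as [u' Hu']. specialize (HbA u' Hu').
        assert (h := dp_lip _ _ _ _ _ Hu Hu'). lra. }
    destruct (hd_ex A B HAn HBn HAb (proj1 (proj2 (proj2 HB)))) as [s Hs].
    assert (s <= r + e/2).
    { apply (hd_le A B s); auto.
      - intros a t' Ha Ht'. destruct (C a Ha) as [y [Hy Hay]].
        assert (h := dp_le _ _ _ _ Ht' Hy). lra.
      - intros b t' [_ Hb] Ht'. auto. }
    destruct Ht as [h1 _]. assert (t <= s) by (apply h1; exists B; auto). lra. }
  assert (HXX := inH_self X HXn HXb). assert (HYY := inH_self Y HYn HYb).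
  destruct (inf_ex (fun s => exists B, inH Z Y B /\ hdist Z X B s) s1) as [tX [HtX1 HtX2]].
  - destruct (hd_ex X Y HXn HYn HXb HYb) as [s Hs]. exists s, Y; auto.
  - intros s [B [[HBn [HBY _]] Hs]]. apply Hs1b. intros t [x [Hx Ht]].
    destruct (dp_ex x B HBn) as [u Hu].
    assert (t <= u) by (apply (dp_mono x B Y u t); auto).
    assert (u <= s) by (apply (hd_ge1 X B s x u); auto). lra.
  - assert (s1 <= tX).
    { apply HtX2. intros s [B [[HBn [HBY _]] Hs]]. apply Hs1b. intros t [x [Hx Ht]].
      destruct (dp_ex x B HBn) as [u Hu].
      assert (t <= u) by (apply (dp_mono x B Y u t); auto).
      assert (u <= s) by (apply (hd_ge1 X B s x u); auto). lra. }
    destruct (sup_ex (fun t => exists A, inH Z X A /\ dist_pt_set (hdist Z) A (inH Z Y) t) r)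
      as [S [HS1 HS2]].
    + exists tX, X. split; auto. split; auto.
    + intros t [A [HA Ht]]. eauto.
    + exists S. split; [split; auto|split].
      * assert (tX <= S) by (apply HS1; exists X; split; auto; split; auto). lra.
      * apply HS2. intros t [A [HA Ht]]. eauto.
Qed.

End S.

Theorem mainTheorem6 (Z : Metric_Space) (X Y : Base Z -> Prop) :
  nonempty X -> nonempty Y -> mcompact Z X -> mcompact Z Y ->
  exists r : R,
    hdist Z X Y r /\
    hausdorff (hdist Z) (inH Z X) (inH Z Y) r.
Proof.
  intros HXn HYn HXc HYc.
  assert (HXb := compact_bnd Z X HXn HXc). assert (HYb := compact_bnd Z Y HYn HYc).
  destruct (hd_ex Z X Y HXn HYn HXb HYb) as [r Hr].
  pose proof Hr as [s1 [s2 [Hs1 [Hs2 Hrs]]]].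
  destruct (half Z X Y s1 r HXn HXb HYn HYb Hs1) as [S1 [HS1 [a1 b1]]].
  { rewrite Hrs; apply Rmax_l. }
  destruct (half Z Y X s2 r HYn HYb HXn HXb Hs2) as [S2 [HS2 [a2 b2]]].
  { rewrite Hrs; apply Rmax_r. }
  exists r. split; auto. exists S1, S2. split; [auto|split; [auto|]].
  apply Rle_antisym.
  - rewrite Hrs. apply Rmax_lub.
    + eapply Rle_trans; [exact a1|apply Rmax_l].
    + eapply Rle_trans; [exact a2|apply Rmax_r].
  - apply Rmax_lub; auto.
Qed.
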